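(* Let $k\ge 6$ be an even integer with $k\equiv 0\pmod 3$, let $\mathcal{N}=\{0,1,\dots,2k-1\}$ and let $\mathcal{R}_1=\{R\in\binom{\mathcal{N}}{k}:\sum_{x\in R}x\equiv 1\pmod 3\}$. Then every subset $X\subset\mathcal{N}$ with $1\le |X|\le k-2$ belongs to $\mathcal{D}(\mathcal{R}_1)$, i.e. there exist $R,R'\in\mathcal{R}_1$ with $X=R\setminus R'$.
   Context: $\binom{\mathcal{N}}{k}$ is the family of all $k$-element subsets of $\mathcal{N}$. For a family $\mathcal{F}$, $\mathcal{D}(\mathcal{F})=\{F\setminus F' : F,F'\in\mathcal{F}\}$. *)

(* Defs.v *)
From mathcomp Require Import all_boot.
Set Implicit Arguments. Unset Strict Implicit. Unset Printing Implicit Defensive.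

Definition R1 (k : nat) : {set {set 'I_(2 * k)}} :=
  [set R : {set 'I_(2 * k)} | (#|R| == k) && ((\sum_(x in R) (x : nat)) %% 3 == 1)].

Definition diff_family (T : finType) (F : {set {set T}}) : {set {set T}} :=
  [set A :\: B | A in F, B in F].

(* Main.v *)
Require Import Defs.
From mathcomp Require Import all_boot.
From mathcomp Require Import zify.

Definition gad (g0 g1 g2 h : nat) := forall r, r < 3 -> exists v0 v1 v2,
  [/\ v0 <= g0, v1 <= g1, v2 <= g2, v0 + v1 + v2 = h & (v1 + 2 * v2) %% 3 = r].

Lemma addmod a b r : r < 3 -> b %% 3 = (r + 3 - a %% 3) %% 3 -> (a + b) %% 3 = r.
Proof.
move=> hr; rewrite -modnDm => ->.
have := ltn_pmod a (isT : 0 < 3).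
by case: (a %% 3) => [|[|[|]]] //; case: r hr => [|[|[|]]].
Qed.

Lemma fill u0 u1 u2 n : n <= u0 + u1 + u2 ->
  exists f0 f1 f2, [/\ f0 <= u0, f1 <= u1, f2 <= u2 & f0 + f1 + f2 = n].
Proof.
move=> hn; case: (leqP n u0) => h0.
  by exists n, 0, 0; split => //; lia.
case: (leqP n (u0 + u1)) => h1.
  by exists u0, (n - u0), 0; split => //; lia.
by exists u0, u1, (n - u0 - u1); split => //; lia.
Qed.

Lemma gadget (u0 u1 u2 g0 g1 g2 h j r : nat) :
  g0 <= u0 -> g1 <= u1 -> g2 <= u2 -> gad g0 g1 g2 h ->
  h <= j -> j + (g0 + g1 + g2) <= u0 + u1 + u2 + h -> r < 3 ->
  exists v0 v1 v2, [/\ v0 <= u0, v1 <= u1, v2 <= u2, v0 + v1 + v2 = j & (v1 + 2 * v2) %% 3 = r].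
Proof.
move=> h0 h1 h2 G hj hs hr.
have [f0 [f1 [f2 [F0 F1 F2 Fs]]]] := @fill (u0 - g0) (u1 - g1) (u2 - g2) (j - h) (ltac:(lia)).
have [v0 [v1 [v2 [e0 e1 e2 es er]]]] := G ((r + 3 - (f1 + 2 * f2) %% 3) %% 3) (ltn_pmod _ (isT : 0 < 3)).
exists (f0 + v0), (f1 + v1), (f2 + v2); split; [lia|lia|lia|lia|].
have -> : f1 + v1 + 2 * (f2 + v2) = (f1 + 2 * f2) + (v1 + 2 * v2) by lia.
exact: addmod.
Qed.

Lemma gadRb : gad 1 1 1 1.
Proof.
move=> r hr; case: r hr => [|[|[|]]] // _.
- by exists 1, 0, 0.
- by exists 0, 1, 0.
- by exists 0, 0, 1.
Qed.
Lemma gad01 : gad 2 2 0 2.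
Proof.
move=> r hr; case: r hr => [|[|[|]]] // _.
- by exists 2, 0, 0.
- by exists 1, 1, 0.
- by exists 0, 2, 0.
Qed.
Lemma gad02 : gad 2 0 2 2.
Proof.
move=> r hr; case: r hr => [|[|[|]]] // _.
- by exists 2, 0, 0.
- by exists 0, 0, 2.
- by exists 1, 0, 1.
Qed.
Lemma gad12 : gad 0 2 2 2.
Proof.
move=> r hr; case: r hr => [|[|[|]]] // _.
- by exists 0, 1, 1.
- by exists 0, 0, 2.
- by exists 0, 2, 0.
Qed.

Definition sol (y0 y1 y2 k m s : nat) := exists d0 d1 d2 b0 b1 b2,
  [/\ [/\ b0 <= d0 <= y0, b1 <= d1 <= y1 & b2 <= d2 <= y2],
      d0 + d1 + d2 = k, b0 + b1 + b2 = m,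
      (d1 + 2 * d2) %% 3 = 1 & (b1 + 2 * b2) %% 3 = s].

Lemma step y0 y1 y2 k m s a0 a1 a2 hA g0 g1 g2 hB :
  gad g0 g1 g2 hB -> gad a0 a1 a2 hA ->
  g0 + a0 <= y0 -> g1 + a1 <= y1 -> g2 + a2 <= y2 ->
  hA + (g0 + g1 + g2) <= k ->
  k + (a0 + a1 + a2) <= y0 + y1 + y2 + hA ->
  hB <= m -> m + (g0 + g1 + g2) <= k + hB -> s < 3 ->
  sol y0 y1 y2 k m s.
Proof.
move=> GB GA c0 c1 c2 k1 k2 m1 m2 hs.
have [e0 [e1 [e2 [E0 E1 E2 Es Er]]]] :=
  gadget (y0 - g0) (y1 - g1) (y2 - g2) a0 a1 a2 hA
   (k - (g0 + g1 + g2)) ((1 + 3 - (g1 + 2 * g2) %% 3) %% 3)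
   (ltac:(lia)) (ltac:(lia)) (ltac:(lia)) GA (ltac:(lia)) (ltac:(lia)) (ltn_pmod _ (isT : 0 < 3)).
have [b0 [b1 [b2 [B0 B1 B2 Bs Br]]]] :=
  gadget (e0 + g0) (e1 + g1) (e2 + g2) g0 g1 g2 hB m s
   (ltac:(lia)) (ltac:(lia)) (ltac:(lia)) GB (ltac:(lia)) (ltac:(lia)) hs.
exists (e0 + g0), (e1 + g1), (e2 + g2), b0, b1, b2; split; [by split; lia | lia | lia | | exact: Br].
have -> : e1 + g1 + 2 * (e2 + g2) = (g1 + 2 * g2) + (e1 + 2 * e2) by lia.
exact: addmod.
Qed.

Lemma arith q m x0 x1 x2 y0 y1 y2 s :
  1 <= q -> 1 <= m -> m + 2 <= 6 * q ->
  x0 + y0 = 4 * q -> x1 + y1 = 4 * q -> x2 + y2 = 4 * q -> x0 + x1 + x2 = m -> s < 3 ->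
  sol y0 y1 y2 (6 * q) m s.
Proof.
move=> q1 m1 m2 e0 e1 e2 ex hs.
case: (leqP y2 1) => H2.
  case: (posnP y2) => P2.
    by apply: (@step y0 y1 y2 _ m s 2 2 0 2 2 2 0 2 gad01 gad01); lia.
  by apply: (@step y0 y1 y2 _ m s 1 1 1 1 2 2 0 2 gad01 gadRb); lia.
case: (leqP y1 1) => H1.
  case: (posnP y1) => P1.
    by apply: (@step y0 y1 y2 _ m s 2 0 2 2 2 0 2 2 gad02 gad02); lia.
  by apply: (@step y0 y1 y2 _ m s 1 1 1 1 2 0 2 2 gad02 gadRb); lia.
case: (leqP y0 1) => H0.
  case: (posnP y0) => P0.
    by apply: (@step y0 y1 y2 _ m s 0 2 2 2 0 2 2 2 gad12 gad12); lia.
  by apply: (@step y0 y1 y2 _ m s 1 1 1 1 0 2 2 2 gad12 gadRb); lia.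
by apply: (@step y0 y1 y2 _ m s 1 1 1 1 1 1 1 1 gadRb gadRb); lia.
Qed.

Set Implicit Arguments. Unset Strict Implicit. Unset Printing Implicit Defensive.

Definition M n r : {set 'I_n} := [set x : 'I_n | x %% 3 == r].
Definition cl n r (S : {set 'I_n}) := S :&: M n r.

Lemma mod3 (x : nat) : x %% 3 = 0 \/ x %% 3 = 1 \/ x %% 3 = 2.
Proof. lia. Qed.

Lemma sum_split n (F : 'I_n -> nat) (S : {set 'I_n}) :
  \sum_(x in S) F x = \sum_(x in cl 0 S) F x + \sum_(x in cl 1 S) F x + \sum_(x in cl 2 S) F x.
Proof.
rewrite (big_setID (M n 0)) (@big_setID _ _ _ _ (S :\: M n 0) (M n 1)) /= addnA.
congr (_ + _ + _); apply: eq_bigl => x; rewrite !inE;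
  by case: (mod3 x) => [->|[->|->]]; rewrite ?andbT ?andbF.
Qed.

Lemma card_split n (S : {set 'I_n}) : #|S| = #|cl 0 S| + #|cl 1 S| + #|cl 2 S|.
Proof. by rewrite -!sum1_card (sum_split (fun _ => 1)). Qed.

Lemma sum_cl n r (S : {set 'I_n}) :
  \sum_(x in cl r S) (x : nat) = (\sum_(x in cl r S) (x %/ 3)) * 3 + #|cl r S| * r.
Proof.
rewrite big_distrl /= -sum_nat_const -big_split /=; apply: eq_bigr => x.
by rewrite !inE => /andP[_ /eqP <-]; exact: divn_eq.
Qed.

Lemma sum_mod n (S : {set 'I_n}) :
  (\sum_(x in S) (x : nat)) %% 3 = (#|cl 1 S| + 2 * #|cl 2 S|) %% 3.
Proof.
rewrite (sum_split (fun x => nat_of_ord x)) !sum_cl; lia.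
Qed.

Lemma exists_sub (T : finType) (S : {set T}) n : n <= #|S| ->
  exists2 U : {set T}, U \subset S & #|U| = n.
Proof.
move=> hn; exists [set x in take n (enum S)].
  by apply/subsetP => x; rewrite inE => /mem_take; rewrite mem_enum.
rewrite cardsE; move/card_uniqP: (take_uniq n (enum_uniq (mem S))) => ->.
by rewrite size_takel // -cardE.
Qed.

Lemma realize n (S : {set 'I_n}) v0 v1 v2 :
  v0 <= #|cl 0 S| -> v1 <= #|cl 1 S| -> v2 <= #|cl 2 S| ->
  exists U : {set 'I_n}, [/\ U \subset S, #|cl 0 U| = v0, #|cl 1 U| = v1 & #|cl 2 U| = v2].
Proof.
move=> /exists_sub[T0 s0 c0] /exists_sub[T1 s1 c1] /exists_sub[T2 s2 c2].
have H r (T : {set 'I_n}) x : T \subset cl r S -> x \in T -> x \in S /\ x %% 3 = r.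
  by move=> /subsetP sT /sT; rewrite !inE => /andP[-> /eqP].
exists (T0 :|: T1 :|: T2); split.
- have sS r (T : {set 'I_n}) : T \subset cl r S -> T \subset S.
    by move=> h; apply: subset_trans h (subsetIl _ _).
  by rewrite !subUset (sS _ _ s0) (sS _ _ s1) (sS _ _ s2).
- rewrite -c0; apply: eq_card => x; rewrite !inE.
  case E0: (x \in T0); first by have [_ ->] := H _ _ _ s0 E0.
  case E1: (x \in T1); first by have [_ ->] := H _ _ _ s1 E1.
  case E2: (x \in T2); first by have [_ ->] := H _ _ _ s2 E2.
  done.
- rewrite -c1; apply: eq_card => x; rewrite !inE.
  case E1: (x \in T1); first by have [_ ->] := H _ _ _ s1 E1; rewrite orbT.
  case E0: (x \in T0); first by have [_ ->] := H _ _ _ s0 E0.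
  case E2: (x \in T2); first by have [_ ->] := H _ _ _ s2 E2.
  done.
- rewrite -c2; apply: eq_card => x; rewrite !inE.
  case E2: (x \in T2); first by have [_ ->] := H _ _ _ s2 E2; rewrite orbT.
  case E0: (x \in T0); first by have [_ ->] := H _ _ _ s0 E0.
  case E1: (x \in T1); first by have [_ ->] := H _ _ _ s1 E1.
  done.
Qed.

Lemma card_M n c r : n = 3 * c -> r < 3 -> #|M n r| = c.
Proof.
move=> -> hr; rewrite /M -sum1dep_card big_mkcond /=.
rewrite -(big_mkord xpredT (fun i => if i %% 3 == r then 1 else 0)).
elim: c => [|c IH]; first by rewrite big_geq.
have -> : 3 * c.+1 = (3 * c).+1.+1.+1 by lia.
rewrite !big_nat_recr //= IH.
have -> : (3 * c).+2 %% 3 = 2 by lia.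
have -> : (3 * c).+1 %% 3 = 1 by lia.
have -> : (3 * c) %% 3 = 0 by lia.
by move: hr; case: r {IH} => [|[|[|]]] //= _; lia.
Qed.

Unset Implicit Arguments.
Theorem mainTheorem9 (k : nat) :
  6 <= k -> ~~ odd k -> k %% 3 = 0 ->
  forall X : {set 'I_(2 * k)}, 1 <= #|X| <= k - 2 ->
    X \in diff_family (R1 k).
Proof.
move=> k6 ke k3 X /andP[m1 m2].
have [q hq] : exists q, k = 6 * q.
  have ke' : k %% 2 = 0 by rewrite modn2; case: (odd k) ke.
  exists (k %/ 6); clear -ke' k3; lia.
have q1 : 1 <= q by clear -hq k6; lia.
pose c := 4 * q.
have kc : 2 * k = 3 * c by rewrite /c hq; lia.
set Y := ~: X.
have cxy r : r < 3 -> #|cl r X| + #|cl r Y| = c.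
  move=> hr; rewrite -(card_M kc hr) -(cardsID X (M (2 * k) r)) /cl.
  by rewrite setDE [M _ r :&: X]setIC [M _ r :&: ~: X]setIC.
have hs : (\sum_(x in X) (x : nat)) %% 3 < 3 by rewrite ltn_pmod.
have [d0 [d1 [d2 [b0 [b1 [b2 [[/andP[hb0 hd0] /andP[hb1 hd1] /andP[hb2 hd2]] ds bs dr br]]]]]]] :=
  @arith q #|X| _ _ _ _ _ _ _ q1 m1 (ltac:(lia)) (cxy 0 isT) (cxy 1 isT) (cxy 2 isT) (esym (card_split X)) hs.
rewrite -hq in ds.
have [R' [sR' c0 c1 c2]] := realize hd0 hd1 hd2.
have [B [sB e0 e1 e2]] := realize (S := R') (v0 := b0) (v1 := b1) (v2 := b2)
   (ltac:(clear -hb0 c0; lia)) (ltac:(clear -hb1 c1; lia)) (ltac:(clear -hb2 c2; lia)).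
have cR' : #|R'| = k by rewrite card_split c0 c1 c2.
have sumR' : (\sum_(x in R') (x : nat)) %% 3 = 1 by rewrite sum_mod c1 c2.
have cB : #|B| = #|X| by rewrite (card_split B) e0 e1 e2.
have sumB : (\sum_(x in B) (x : nat)) %% 3 = (\sum_(x in X) (x : nat)) %% 3.
  by rewrite sum_mod e1 e2.
have hR'X x : x \in R' -> (x \in X) = false.
  by move=> /(subsetP sR'); rewrite inE => /negbTE.
have hBR x : x \in B -> x \in R' by move/(subsetP sB).
set A := R' :\: B.
set R := X :|: A.
have spR (F : 'I_(2 * k) -> nat) : \sum_(x in R) F x = \sum_(x in X) F x + \sum_(x in A) F x.
  rewrite (big_setID X); congr (_ + _); apply: eq_bigl => x; rewrite !inE.
    by case: (x \in X); rewrite ?andbF ?andbT.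
  case Hx: (x \in X) => //=.
  by case Hr: (x \in R'); rewrite ?andbF //; rewrite (hR'X x Hr) in Hx.
have spR' (F : 'I_(2 * k) -> nat) : \sum_(x in R') F x = \sum_(x in B) F x + \sum_(x in A) F x.
  rewrite (big_setID B); congr (_ + _); apply: eq_bigl => x; rewrite !inE.
  by case Hb: (x \in B); rewrite ?andbT ?andbF // hBR.
have cRR := spR (fun _ => 1); have cRR' := spR' (fun _ => 1).
rewrite !sum1_card in cRR cRR'.
have sRR := spR (fun x => nat_of_ord x); have sRR' := spR' (fun x => nat_of_ord x).
apply/imset2P; exists R R'.
- rewrite inE; apply/andP; split; apply/eqP.
    by rewrite cRR; move: cRR'; rewrite cR' cB; clear; lia.
  by rewrite sRR -modnDml -sumB modnDml -sRR'.
- rewrite inE cR' sumR' !eqxx //.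
- apply/setP => x; rewrite !inE.
  case Hx: (x \in X) => /=.
    by case Hr: (x \in R') => //; rewrite (hR'X x Hr) in Hx.
  by case: (x \in R'); rewrite /= ?andbF.
Qed.
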